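(* Let $a,b,c$ be nonzero constants, $N\ge1$, and $p_i,q_j$ ($1\le i,j\le N$) nonzero constants with $p_i+q_j\neq0$, and $c_{ij}$ arbitrary constants. For integers $n,k,l,m$ let $$\tau_n(k,l,m)=\det\Big(c_{ij}+\frac{1}{p_i+q_j}\Big(-\frac{p_i}{q_j}\Big)^{n}\Big(\frac{1-ap_i}{1+aq_j}\Big)^{-k}\Big(\frac{1-bp_i^{-1}}{1+bq_j^{-1}}\Big)^{-l}\Big(\frac{1-cp_i}{1+cq_j}\Big)^{m}\Big)_{1\le i,j\le N},$$ or alternatively the Casorati determinant $\tau_n(k,l,m)=\det(\phi^{(i)}_{n+j-1}(k,l,m))_{1\le i,j\le N}$ with $$\phi^{(i)}_n(k,l,m)=c_ip_i^n(1-ap_i)^{-k}(1-bp_i^{-1})^{-l}(1-cp_i)^m+d_iq_i^n(1-aq_i)^{-k}(1-bq_i^{-1})^{-l}(1-cq_i)^m$$ ($c_i,d_i$ arbitrary constants). Then $\tau_n(k,l,m)$ satisfies $$\tau_n(k,l+1,m)\tau_n(k,l,m-1)-bc\,\tau_{n+1}(k,l,m-1)\tau_{n-1}(k,l+1,m)=(1-bc)\tau_n(k,l,m)\tau_n(k,l+1,m-1),$$ $$\tau_{n+1}(k,l,m-1)\tau_n(k+1,l,m)-ac^{-1}\tau_{n+1}(k+1,l,m)\tau_n(k,l,m-1)=(1-ac^{-1})\tau_n(k,l,m)\tau_{n+1}(k+1,l,m-1).$$ *)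

(* Defs.v *)
From HB Require Import structures.
From mathcomp Require Import all_boot all_order all_algebra.
Set Implicit Arguments. Unset Strict Implicit. Unset Printing Implicit Defensive.
Import Order.TTheory GRing.Theory Num.Theory.
Local Open Scope ring_scope.

Definition tau_gram (R : fieldType) (N : nat) (a b c : R) (p q : 'I_N -> R)
  (C : 'I_N -> 'I_N -> R) (n k l m : int) : R :=
  \det (\matrix_(i < N, j < N)
     (C i j + (p i + q j)^-1 * (- (p i / q j)) ^ n
        * ((1 - a * p i) / (1 + a * q j)) ^ (- k)
        * ((1 - b / p i) / (1 + b / q j)) ^ (- l)
        * ((1 - c * p i) / (1 + c * q j)) ^ m)).

Definition phi_cas (R : fieldType) (N : nat) (a b c : R) (p q cc dd : 'I_N -> R)
  (i : 'I_N) (n k l m : int) : R :=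
  cc i * p i ^ n * (1 - a * p i) ^ (- k) * (1 - b / p i) ^ (- l) * (1 - c * p i) ^ m
  + dd i * q i ^ n * (1 - a * q i) ^ (- k) * (1 - b / q i) ^ (- l) * (1 - c * q i) ^ m.

(* Casorati-type tau function: det(phi^{(i)}_{n+j-1}), 1<=i,j<=N, i.e. with
   0-based j the column index is n + j. *)
Definition tau_cas (R : fieldType) (N : nat) (a b c : R) (p q cc dd : 'I_N -> R)
  (n k l m : int) : R :=
  \det (\matrix_(i < N, j < N) phi_cas a b c p q cc dd i (n + (j : nat)%:Z) k l m).

Definition satisfies_bilinear (R : fieldType) (a b c : R)
  (tau : int -> int -> int -> int -> R) : Prop :=
  forall n k l m : int,
    tau n k (l + 1) m * tau n k l (m - 1)
      - b * c * tau (n + 1) k l (m - 1) * tau (n - 1) k (l + 1) m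
    = (1 - b * c) * tau n k l m * tau n k (l + 1) (m - 1)
  /\
    tau (n + 1) k l (m - 1) * tau n (k + 1) l m
      - a / c * tau (n + 1) (k + 1) l m * tau n k l (m - 1)
    = (1 - a / c) * tau n k l m * tau (n + 1) (k + 1) l (m - 1).

(* Main.v *)
Require Import Defs.
From HB Require Import structures.
From mathcomp Require Import all_boot all_order all_algebra.
From mathcomp Require Import fingroup perm ring zify.
Set Implicit Arguments. Unset Strict Implicit. Unset Printing Implicit Defensive.
Import Order.TTheory GRing.Theory Num.Theory.
Local Open Scope ring_scope.

Section Schur.
Variable R : comNzRingType.

Lemma schur_adj N k (M : 'M[R]_N) (U : 'M_(N,k)) (V : 'M_(k,N)) (E : 'M_k) :
  \det M ^+ (N + k) * \det (block_mx M U V E) =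
  \det M ^+ N.+1 * \det (\det M *: E - V *m \adj M *m U).
Proof.
set d := \det M.
set Q := block_mx (\adj M) (- (\adj M *m U)) 0 (d%:M : 'M_k).
have h1 : \det (block_mx M 0 0 (1%:M : 'M_k)) = d by rewrite det_ublock det1 mulr1.
have hMQ : block_mx M 0 0 (1%:M : 'M_k) *m Q = block_mx (d%:M) (- (d *: U)) 0 (d%:M).
  rewrite mulmx_block !mul0mx !mulmx0 !mul1mx !addr0 !add0r mul_mx_adj.
  rewrite mulmxN mulmxA mul_mx_adj mul_scalar_mx.
  by [].
have hQ : d * \det Q = d ^+ N * d ^+ k.
  by rewrite -{1}h1 -det_mulmx hMQ det_ublock !det_scalar.
have hAQ : block_mx M U V E *m Q = block_mx (d%:M) 0 (V *m \adj M) (d *: E - V *m \adj M *m U).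
  rewrite mulmx_block !mulmx0 !addr0 mul_mx_adj mulmxN mulmxA mul_mx_adj.
  by rewrite mul_scalar_mx !mul_mx_scalar addNr mulmxN mulmxA addrC.
have hdet : \det (block_mx M U V E) * \det Q = d ^+ N * \det (d *: E - V *m \adj M *m U).
  by rewrite -det_mulmx hAQ det_lblock det_scalar.
by rewrite exprD -hQ -mulrA (mulrC (\det Q)) hdet exprS mulrA.
Qed.

End Schur.

Lemma det2 (R : comNzRingType) (S : 'M[R]_2) :
  \det S = S 0 0 * S 1 1 - S 0 1 * S 1 0.
Proof.
rewrite (expand_det_row _ 0) !big_ord_recl big_ord0 /cofactor !det_mx11 !mxE /=.
have e1 : lift 0 0 = 1 :> 'I_2 by apply/val_inj.
have e2 : lift ord0 ord0 = 1 :> 'I_2 by apply/val_inj.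
have e3 : lift (lift ord0 ord0) 0 = 0 :> 'I_2 by apply/val_inj.
have e4 : lift ord0 0 = 1 :> 'I_2 by apply/val_inj.
rewrite ?e1 ?e2 ?e3 ?e4 /=.
have e5 : lift 1 0 = 0 :> 'I_2 by apply/val_inj.
rewrite e5 /bump /= expr0 expr1 mul1r addr0 mulN1r mulrN.

done.
Qed.

Section JacNZ.
Variable R : idomainType.

Definition bd N (M : 'M[R]_N) (U : 'M_(N,2)) (V : 'M_(2,N)) (E : 'M_2) (a b : 'I_2) :=
  \det (block_mx M (col b U) (row a V) ((E a b)%:M : 'M_1)).

Lemma VAU_entry N (V : 'M[R]_(2,N)) (A : 'M_N) (U : 'M_(N,2)) a b :
  (row a V *m A *m col b U) 0 0 = (V *m A *m U) a b.
Proof.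
rewrite -row_mul !mxE; apply: eq_bigr => k _; by rewrite !mxE.
Qed.

Lemma bd_eq N (M : 'M[R]_N) U V E a b : \det M != 0 ->
  bd M U V E a b = \det M * E a b - (V *m \adj M *m U) a b.
Proof.
move=> nz; have h := schur_adj M (col b U) (row a V) ((E a b)%:M).
apply: (mulfI (expf_neq0 N.+1 nz)); rewrite /bd -{1}[N.+1]addn1 h.
rewrite det_mx11 !mxE eqxx mulr1n; congr (_ * (_ - _)); apply: eq_bigr => k _.
by rewrite -row_mul !mxE.
Qed.

Lemma jacobi_nz N (M : 'M[R]_N) U V E : \det M != 0 ->
  \det M * \det (block_mx M U V E) =
  bd M U V E 0 0 * bd M U V E 1 1 - bd M U V E 0 1 * bd M U V E 1 0.
Proof.
move=> nz; have h := schur_adj M U V E.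
apply: (mulfI (expf_neq0 N.+1 nz)); rewrite mulrA -exprSr -{1}[N.+2]addn2 h.
by rewrite det2 !bd_eq // !mxE.
Qed.

End JacNZ.

Section JacF.
Variable R : fieldType.

Lemma map_hornerC m n (X : 'M[R]_(m,n)) :
  map_mx (horner_eval 0) (map_mx polyC X) = X.
Proof. by apply/matrixP => i j; rewrite !mxE /= horner_evalE hornerC. Qed.

Lemma jacobi N (M : 'M[R]_N) U V E :
  \det M * \det (block_mx M U V E) =
  bd M U V E 0 0 * bd M U V E 1 1 - bd M U V E 0 1 * bd M U V E 1 0.
Proof.
pose Mp := char_poly_mx (- M).
have nz : \det Mp != 0 by apply: monic_neq0; apply: char_poly_monic.
have eM : map_mx (horner_eval 0) Mp = M.
  apply/matrixP => i j; rewrite !mxE /= horner_evalE !hornerE.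
  by case: (i == j); rewrite /= ?hornerE ?mulr1n ?mulr0n ?hornerE //=; rewrite ?opprK ?sub0r ?opprK ?subr0 ?oppr0.
have := jacobi_nz (map_mx polyC U) (map_mx polyC V) (map_mx polyC E) nz.
move/(congr1 (horner_eval 0)).
rewrite rmorphB !rmorphM /= /bd -!det_map_mx !map_block_mx !map_col !map_row.
rewrite !map_scalar_mx eM !map_hornerC.
by rewrite !mxE /= !horner_evalE !hornerC.
Qed.

End JacF.

Lemma schur_inv (R : comNzRingType) N k (M : 'M[R]_N) (U : 'M_(N,k)) (V : 'M_(k,N)) E K :
  K *m E = 1%:M -> \det (block_mx M U V E) = \det (M - U *m K *m V) * \det E.
Proof.
move=> KE.
have -> : block_mx M U V E =
   block_mx 1%:M (U *m K) 0 1%:M *m block_mx (M - U *m K *m V) 0 V E.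
  rewrite mulmx_block !mul1mx !mul0mx !add0r -[U *m K *m E]mulmxA KE mulmx1.
  by rewrite subrK.
by rewrite det_mulmx det_ublock !det1 !mul1r det_lblock.
Qed.

Lemma mxsubE (R : zmodType) m n (A B : 'M[R]_(m,n)) i j : (A - B) i j = A i j - B i j.
Proof. by rewrite !mxE. Qed.
Lemma mxaddE (R : zmodType) m n (A B : 'M[R]_(m,n)) i j : (A + B) i j = A i j + B i j.
Proof. by rewrite !mxE. Qed.

Definition mx2 (R : Type) (a b c d : R) : 'M[R]_2 :=
  \matrix_(i < 2, j < 2) if (i : nat) == 0%N then (if (j : nat) == 0%N then a else b)
                          else (if (j : nat) == 0%N then c else d).

Lemma det_mx2 (R : comNzRingType) (a b c d : R) : \det (mx2 a b c d) = a * d - b * c.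
Proof. by rewrite det2 !mxE. Qed.

Section GramMaster.
Variable R : fieldType.
Variables (N : nat) (x y ph ps : 'I_N -> R) (C : 'I_N -> 'I_N -> R) (al be : R).
Hypotheses (al0 : al != 0) (be0 : be != 0) (xy0 : forall i j, x i + y j != 0)
  (y0 : forall j, y j != 0) (ax0 : forall i, 1 - al * x i != 0) (bx0 : forall i, 1 - be * x i != 0).

Ltac nzt := rewrite /= ?bx0 ?ax0 ?y0 ?xy0 ?al0 ?be0 ?oppr_eq0 ?oner_eq0 ?invr_eq0 ?mulf_neq0 ?andbT //.

Definition GM (f : R -> R -> R) : 'M[R]_N :=
  \matrix_(i, j) (C i j + (x i + y j)^-1 * (ph i * ps j * f (x i) (y j))).

Let f000 (p q : R) : R := 1.
Let f101 (p q : R) := (- (p / q)) * ((1 + be * q) / (1 - be * p)).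
Let f010 (p q : R) := (1 + al * q) / (1 - al * p).
Let f110 (p q : R) := (- (p / q)) * ((1 + al * q) / (1 - al * p)).
Let f001 (p q : R) := (1 + be * q) / (1 - be * p).
Let f111 (p q : R) := (- (p / q)) * ((1 + al * q) / (1 - al * p)) * ((1 + be * q) / (1 - be * p)).

Lemma gram_master :
  \det (GM f101) * \det (GM f010) - al / be * \det (GM f110) * \det (GM f001)
  = (1 - al / be) * \det (GM f000) * \det (GM f111).
Proof.
pose M := GM f000.
pose U : 'M_(N,2) := \matrix_(i, a) (ph i / (1 - (if (a : nat) == 0%N then be else al) * x i)).
pose V : 'M_(2,N) := \matrix_(b, j) (- (ps j * (if (b : nat) == 0%N then (y j)^-1 else 1))).
pose E := mx2 (-1) (-1) be^-1 al^-1.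
have J := jacobi M U V E.
have bdE : forall a b, E a b != 0 -> bd M U V E a b =
   \det (M - col b U *m (E a b)^-1%:M *m row a V) * E a b.
  move=> a b nz; rewrite /bd (@schur_inv _ N 1 M (col b U) (row a V) ((E a b)%:M) ((E a b)^-1%:M)); last by rewrite mul_scalar_mx scale_scalar_mx mulVf.
  by rewrite det_mx11 [((E a b)%:M) 0 0]mxE eqxx mulr1n.
have r1 : forall a b c i j, (col b U *m c%:M *m row a V) i j = U i b * c * V a j.
  by move=> a b c i j; rewrite !mxE big_ord1 !mxE big_ord1 !mxE eqxx mulr1n.
have b00 : bd M U V E 0 0 = - \det (GM f101).
  rewrite bdE ?mxE /=; last by rewrite oppr_eq0 oner_eq0.
  rewrite mulrN1; congr (- \det _); apply/matrixP => i j; rewrite mxsubE r1 !mxE /=.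
  rewrite /f000 /f101; field; nzt.
have b11 : bd M U V E 1 1 = \det (GM f010) / al.
  rewrite bdE ?mxE /=; last by rewrite invr_eq0.
  congr (\det _ * _); apply/matrixP => i j; rewrite mxsubE r1 !mxE /=.
  rewrite /f000 /f010; field; nzt.
have b01 : bd M U V E 0 1 = - \det (GM f110).
  rewrite bdE ?mxE /=; last by rewrite oppr_eq0 oner_eq0.
  rewrite mulrN1; congr (- \det _); apply/matrixP => i j; rewrite mxsubE r1 !mxE /=.
  rewrite /f000 /f110; field; nzt.
have b10 : bd M U V E 1 0 = \det (GM f001) / be.
  rewrite bdE ?mxE /=; last by rewrite invr_eq0.
  congr (\det _ * _); apply/matrixP => i j; rewrite mxsubE r1 !mxE /=.
  rewrite /f000 /f001; field; nzt.
pose P := mx2 (be - al) 0 1 1.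
pose U' : 'M_(N,2) := \matrix_(i, a) (if (a : nat) == 0%N then ph i * x i / ((1 - al * x i) * (1 - be * x i))
                                       else ph i / (1 - al * x i)).
pose E' := mx2 0 (-1) (- (al * be)^-1) al^-1.
pose K' := mx2 (- be) (- (al * be)) (-1) 0.
have hU : U = U' *m P.
  apply/matrixP => i a; rewrite !mxE !big_ord_recl big_ord0 !mxE /=.
  case: a => [[|[|a]] Ha] //=; field; nzt.
have hE : E = E' *m P.
  apply/matrixP => a b; rewrite !mxE !big_ord_recl big_ord0 !mxE /=.
  case: a => [[|[|a]] Ha]; case: b => [[|[|b]] Hb] //=; field; nzt.
have hKE : K' *m E' = 1%:M.
  apply/matrixP => a b; rewrite !mxE !big_ord_recl big_ord0 !mxE /=.
  case: a => [[|[|a]] Ha]; case: b => [[|[|b]] Hb] //=; field; nzt.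
have hM111 : M - U' *m K' *m V = GM f111.
  apply/matrixP => i j; rewrite mxsubE !mxE !big_ord_recl !big_ord0 !mxE !big_ord_recl !big_ord0 !mxE /=.
  rewrite /f000 /f111; field; nzt.
have hbig : \det (block_mx M U V E) = \det (GM f111) * (- (al * be)^-1) * (be - al).
  have -> : block_mx M U V E = block_mx M U' V E' *m block_mx 1%:M 0 0 P.
    by rewrite mulmx_block !mulmx0 !addr0 !mulmx1 !add0r hU hE.
  rewrite det_mulmx det_ublock det1 mul1r (schur_inv _ _ _ hKE) hM111 !det_mx2.
  ring.
transitivity (- al * (\det M * \det (block_mx M U V E))).
  rewrite J b00 b11 b01 b10; field; nzt.
rewrite hbig /M; field; nzt.
Qed.
End GramMaster.

Section MK.
Variable R : comNzRingType.

Definition mk m n (h : nat -> nat -> R) : 'M[R]_(m,n) := \matrix_(i, j) h i j.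

Lemma eq_mk m n (h h' : nat -> nat -> R) :
  (forall i j, (i < m)%N -> (j < n)%N -> h i j = h' i j) -> mk m n h = mk m n h'.
Proof. by move=> H; apply/matrixP => i j; rewrite !mxE H. Qed.

Lemma mk_block N k (h11 : nat -> nat -> R) h12 h21 h22 :
  block_mx (mk N N h11) (mk N k h12) (mk k N h21) (mk k k h22) =
  mk (N + k) (N + k) (fun i j => if (i < N)%N then (if (j < N)%N then h11 i j else h12 i (j - N)%N)
                       else (if (j < N)%N then h21 (i - N)%N j else h22 (i - N)%N (j - N)%N)).
Proof.
apply/matrixP => i j; rewrite [RHS]mxE.
case: (split_ordP i) => i' ->; case: (split_ordP j) => j' ->;
  rewrite ?block_mxEul ?block_mxEur ?block_mxEdl ?block_mxEdr !mxE /= ?ltn_ord //=;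
  rewrite ?ltnNge ?leq_addr /= ?addKn //.
Qed.

Lemma sum_delta n (F : nat -> R) c :
  \sum_(k < n) F k * ((k : nat) == c)%:R = if (c < n)%N then F c else 0.
Proof.
elim: n => [|n IH]; first by rewrite big_ord0.
rewrite big_ord_recr /= IH.
case: (ltngtP c n) => [lt|gt|->].
- by rewrite ltnS (ltnW lt) mulr0 addr0.
- by rewrite ltnS leqNgt gt /= mulr0 addr0.
- by rewrite ltnSn mulr1 add0r.
Qed.

Definition Sh n : 'M[R]_n := mk n n (fun k j => (k == j.+1)%:R).

Lemma mul_sh m n (h : nat -> nat -> R) :
  mk m n h *m Sh n = mk m n (fun i j => if (j.+1 < n)%N then h i j.+1 else 0).
Proof.
apply/matrixP => i j; rewrite !mxE.
rewrite (eq_bigr (fun k : 'I_n => h i k * ((k : nat) == j.+1)%:R)); last by move=> k _; rewrite !mxE.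
by rewrite (sum_delta n (h i)).
Qed.

End MK.

Section Rot.
Variable R : comNzRingType.

Definition rot N j := if (j < N)%N then j.+1 else if j == N then 0%N else j.

Lemma det_rot K N (h : nat -> nat -> R) : (N < K)%N ->
  \det (mk K K (fun i j => h i (rot N j))) = (-1) ^+ N * \det (mk K K h).
Proof.
case: K => [//|K] NK.
pose s := lift_perm (Ordinal NK) (Ordinal (leq_ltn_trans (leq0n N) NK)) 1.
have hs : forall j : 'I_K.+1, val (s j) = rot N j.
  move=> j; case: (unliftP (Ordinal NK) j) => [k ->|->].
  - rewrite lift_perm_lift perm1 /= /rot /bump /=.
    case: (leqP N k) => Hk; rewrite /= ?add1n ?add0n.
    + by rewrite ltnNge (leq_trans Hk (leqnSn k)) /= gtn_eqF.
    + by rewrite Hk.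
  - by rewrite lift_perm_id /= /rot ltnn eqxx.
have -> : mk K.+1 K.+1 (fun i j => h i (rot N j)) = col_perm s (mk K.+1 K.+1 h).
  by apply/matrixP => i j; rewrite !mxE hs.
rewrite col_permE det_mulmx det_perm odd_permV odd_lift_perm odd_perm1 /=.
by rewrite addbF addbF signr_odd mulrC.
Qed.

End Rot.

Section Cas.
Variable R : fieldType.
Variable N : nat.

Lemma mk_col m n (h : nat -> nat -> R) b : col b (mk m n h) = mk m 1 (fun i _ => h i b).
Proof. by apply/matrixP => i j; rewrite !mxE. Qed.
Lemma mk_row m n (h : nat -> nat -> R) a : row a (mk m n h) = mk 1 n (fun _ j => h a j).
Proof. by apply/matrixP => i j; rewrite !mxE. Qed.
Lemma mk_sc (c : R) : (c%:M : 'M_1) = mk 1 1 (fun _ _ => c).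
Proof. by apply/matrixP => i j; rewrite !mxE !ord1 eqxx mulr1n. Qed.

Lemma two_cases j : (N <= j)%N -> (j < N + 2)%N -> j = N \/ j = N.+1.
Proof. lia. Qed.
Lemma one_case j : (N <= j)%N -> (j < N + 1)%N -> j = N.
Proof. lia. Qed.

Ltac fin := rewrite /= ?subnn ?subSnn ?ltnn ?eqxx ?(gtn_eqF (ltnSn N)) ?ltnNge ?leqnSn //=.

Variables (g : nat -> nat -> R) (r1 r2 : nat -> R).

Definition Bigf i t := if (i < N)%N then g i t else if i == N then r1 t else r2 t.
Definition Big := mk (N+2) (N+2) Bigf.
Definition Mid := mk N N (fun i t => g i t.+1).
Definition Winf (r : nat -> R) s i t := if (i < N)%N then g i (s + t) else r (s + t).
Definition Win r s := mk (N+1) (N+1) (Winf r s).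

Lemma jacobi2 :
  \det Mid * \det Big = \det (Win r2 1) * \det (Win r1 0) - \det (Win r2 0) * \det (Win r1 1).
Proof.
pose U := mk N 2 (fun i a => g i (if a == 0%N then 0%N else N.+1)).
pose V := mk 2 N (fun a j => (if a == 0%N then r1 else r2) j.+1).
pose E := mk 2 2 (fun a b => (if a == 0%N then r1 else r2) (if b == 0%N then 0%N else N.+1)).
have J := jacobi Mid U V E.
have hbig : block_mx Mid U V E = mk (N+2) (N+2) (fun i j => Bigf i (rot N j)).
  rewrite mk_block; apply: eq_mk => i j Hi Hj; rewrite /Bigf /rot.
  case: (ltnP i N) => Hi'; case: (ltnP j N) => Hj' //=.
  - by case: (two_cases Hj' Hj) => ->; fin.
  - by case: (two_cases Hi' Hi) => ->; fin.
  - by case: (two_cases Hi' Hi) => ->; case: (two_cases Hj' Hj) => ->; fin.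
have b1 : forall a : 'I_2, bd Mid U V E a 1 = \det (Win (if a == 0 :> nat then r1 else r2) 1).
  move=> a; rewrite /bd mk_col mk_row mk_sc mk_block /Win; congr (\det _); apply: eq_mk => i j Hi Hj.
  rewrite /Winf; case: (ltnP i N) => Hi'; case: (ltnP j N) => Hj' //=.
  - by rewrite (one_case Hj' Hj) add1n.
  - by rewrite (one_case Hj' Hj) mxE.
have b0 : forall a : 'I_2, bd Mid U V E a 0 = (-1) ^+ N * \det (Win (if a == 0 :> nat then r1 else r2) 0).
  move=> a; rewrite /bd mk_col mk_row mk_sc mk_block /Win -det_rot; last by rewrite addn1.
  congr (\det _).
  apply: eq_mk => i j Hi Hj.
  rewrite /Winf /rot; case: (ltnP i N) => Hi'; case: (ltnP j N) => Hj' //=;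
    by rewrite ?(one_case Hj' Hj) ?eqxx ?mxE.
have hb : \det (block_mx Mid U V E) = (-1) ^+ N * \det Big.
  by rewrite hbig det_rot // addn2.
move: J; rewrite hb b0 b0 b1 b1 /=.
move=> J; have nz : (-1) ^+ N != 0 :> R by rewrite signr_eq0.
apply: (mulfI nz); rewrite mulrCA J; ring.
Qed.
End Cas.

Section WinLemmas.
Variable R : comNzRingType.
Variable N : nat.

Lemma det_unitrig n (T : 'M[R]_n) :
  (forall i j : 'I_n, (i < j)%N -> T i j = 0) -> (forall i, T i i = 1) -> \det T = 1.
Proof.
move=> Hz Hd; rewrite det_trig; last by apply/is_trig_mxP.
by rewrite big1 // => i _; rewrite Hd.
Qed.

Lemma mk0 m n : mk m n (fun _ _ => 0 : R) = 0.
Proof. by apply/matrixP => i j; rewrite !mxE. Qed.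

Lemma det_mk11 (c : R) : \det (mk 1 1 (fun _ _ => c)) = c.
Proof. by rewrite det_mx11 mxE. Qed.

Lemma det_T1 n (c : R) : \det (1%:M - c *: Sh R n) = 1.
Proof.
apply: det_unitrig => [i j lt|i]; rewrite !mxE.
- have /negbTE -> : i != j by rewrite neq_ltn lt.
  by rewrite (ltn_eqF (ltn_trans lt (ltnSn j))) mulr0 subr0.
- by rewrite eqxx (ltn_eqF (ltnSn i)) mulr0 subr0.
Qed.

Lemma winG (f : nat -> nat -> R) (c : R) (e : nat) : (N <= e)%N ->
  \det (mk (N+1) (N+1) (fun i t => if (i < N)%N then f i t else c ^+ (e - t))) =
  c ^+ (e - N) * \det (mk N N (fun i t => f i t - c * f i t.+1)).
Proof.
move=> Ne.
rewrite -[LHS]mulr1 -(det_T1 (N+1) c) -det_mulmx mulmxBr mulmx1 -scalemxAr mul_sh.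
have -> : mk (N+1) (N+1) (fun i t => if (i < N)%N then f i t else c ^+ (e - t)) -
    c *: mk (N+1) (N+1) (fun i j => if (j.+1 < N+1)%N then (if (i < N)%N then f i j.+1 else c ^+ (e - j.+1)) else 0)
  = block_mx (mk N N (fun i t => f i t - c * f i t.+1)) (mk N 1 (fun i _ => f i N))
             (mk 1 N (fun _ _ => 0)) (mk 1 1 (fun _ _ => c ^+ (e - N))).
  rewrite mk_block; apply/matrixP => i j; rewrite !mxE.
  have Hi : (i <= N)%N by have := ltn_ord i; lia.
  have Hj : (j <= N)%N by have := ltn_ord j; lia.
  have e1 : forall k : nat, (k.+1 < N + 1)%N = (k < N)%N by move=> k; rewrite addn1 ltnS.
  rewrite !e1.
  case: (ltnP i N) => Hi'; case: (ltnP j N) => Hj'.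
  - by [].
  - have -> : (j : nat) = N by apply/eqP; rewrite eqn_leq Hj Hj'.
    by rewrite mulr0 subr0.
  - have ej : (e - j)%N = (e - j.+1)%N.+1 by rewrite subnSK // (leq_trans Hj' Ne).
    by rewrite ej exprS subrr.
  - have -> : (j : nat) = N by apply/eqP; rewrite eqn_leq Hj Hj'.
    by rewrite mulr0 subr0.
by rewrite mk0 det_ublock det_mk11 mulrC.
Qed.

End WinLemmas.

Section BigLemma.
Variable R : comNzRingType.
Variable N : nat.

Lemma mk_split k (F : nat -> nat -> R) :
  mk (N + k) (N + k) F = block_mx (mk N N F) (mk N k (fun i j => F i (N + j)%N))
     (mk k N (fun i j => F (N + i)%N j)) (mk k k (fun i j => F (N + i)%N (N + j)%N)).
Proof.
rewrite mk_block; apply: eq_mk => i j Hi Hj.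
case: (ltnP i N) => Hi'; case: (ltnP j N) => Hj' //; by rewrite ?subnKC.
Qed.

Lemma mk_lin m n (h1 h2 h3 : nat -> nat -> R) c d :
  mk m n h1 - c *: mk m n h2 + d *: mk m n h3 = mk m n (fun i j => h1 i j - c * h2 i j + d * h3 i j).
Proof. by apply/matrixP => i j; rewrite !mxE. Qed.

Lemma mk_zero m n (h : nat -> nat -> R) :
  (forall i j, (i < m)%N -> (j < n)%N -> h i j = 0) -> mk m n h = 0.
Proof. by move=> H; apply/matrixP => i j; rewrite !mxE H. Qed.

Lemma bigG (f : nat -> nat -> R) (a b : R) :
  \det (mk (N+2) (N+2) (fun i t => if (i < N)%N then f i t else if i == N then a ^+ (N.+1 - t) else b ^+ (N.+1 - t))) =
  (a - b) * \det (mk N N (fun i t => f i t - (a + b) * f i t.+1 + a * b * f i t.+2)).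
Proof.
set A := mk _ _ _.
have hT : \det (1%:M - (a + b) *: Sh R (N+2) + (a * b) *: (Sh R (N+2) *m Sh R (N+2))) = 1.
  rewrite /Sh mul_sh; apply: det_unitrig => [i j lt|i]; rewrite !mxE.
  - have /negbTE -> : i != j by rewrite neq_ltn lt.
    rewrite (ltn_eqF (ltn_trans lt (ltnSn j))) (ltn_eqF (ltn_trans lt (ltn_trans (ltnSn j) (ltnSn j.+1)))).
    by case: ifP => _; rewrite /= ?mulr0n ?mulr1n ?mulr0 ?subr0 ?addr0.
  - rewrite eqxx (ltn_eqF (ltnSn i)) (ltn_eqF (ltn_trans (ltnSn i) (ltnSn i.+1))).
    by case: ifP => _; rewrite /= ?mulr0n ?mulr1n ?mulr0 ?subr0 ?addr0.
rewrite -[LHS]mulr1 -hT -det_mulmx mulmxDr mulmxBr mulmx1 -!scalemxAr mulmxA /A !mul_sh.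
rewrite mk_lin mk_split.
rewrite [X in block_mx _ _ X _]mk_zero; last first.
  move=> i j Hi Hj.
  rewrite ltnNge leq_addr /=.
  have -> : (j.+1 < N + 2)%N by lia.
  have -> : (j.+2 < N + 2)%N by lia.
  have h1 : (N.+1 - j)%N = (N.+1 - j.+2).+2 by lia.
  have h2 : (N.+1 - j.+1)%N = (N.+1 - j.+2).+1 by lia.
  by rewrite h1 h2; case: ifP => _; rewrite !exprS; ring.
rewrite det_ublock mulrC; congr (_ * _); last first.
  congr (\det _); apply: eq_mk => i j Hi Hj; rewrite Hi.
  have -> : (j.+1 < N + 2)%N by lia.
  by have -> : (j.+2 < N + 2)%N by lia.
rewrite det2 !mxE /=.
have m12 : (1 %% 2 = 1)%N by [].
have t1 : (N.+1 < N + 2)%N = true by lia.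
have t2 : (N.+2 < N + 2)%N = false by lia.
have t3 : (N.+3 < N + 2)%N = false by lia.
have t4 : (N.+1 < N)%N = false by lia.
have t5 : (N.+1 == N) = false by lia.
have t6 : (N.+1 - N.+2 = 0)%N by lia.
rewrite m12 addn0 addn1 ltnn eqxx t1 t2 ?t3 t4 t5 ?t6 subnn subSnn ?t3 ?t6.
rewrite expr0 expr1; ring.
Qed.
End BigLemma.

Section CasMaster.
Variable R : fieldType.
Variable N : nat.
Variables (g : nat -> nat -> R) (al be : R).

Definition Dw s (h : nat -> nat -> R) := \det (mk N N (fun i t => h i (s + t)%N)).

Lemma cas_master :
  be * Dw 1 (fun i t => g i t - al * g i t.+1) * Dw 0 (fun i t => g i t - be * g i t.+1)
  - al * Dw 1 (fun i t => g i t - be * g i t.+1) * Dw 0 (fun i t => g i t - al * g i t.+1)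
  = (be - al) * Dw 0 (fun i t => g i t - (al + be) * g i t.+1 + al * be * g i t.+2) * Dw 1 g.
Proof.
pose rA := fun t => al ^+ (N.+1 - t).
pose rB := fun t => be ^+ (N.+1 - t).
have J := jacobi2 N g rA rB.
have hM : \det (Mid N g) = Dw 1 g by [].
have hB : \det (Big N g rA rB) = (al - be) * Dw 0 (fun i t => g i t - (al + be) * g i t.+1 + al * be * g i t.+2).
  exact: bigG.
have WA1 : \det (Win N g rA 1) = Dw 1 (fun i t => g i t - al * g i t.+1).
  have := @winG R N (fun i t => g i t.+1) al N (leqnn N); rewrite subnn expr0 mul1r; exact.
have WB1 : \det (Win N g rB 1) = Dw 1 (fun i t => g i t - be * g i t.+1).
  have := @winG R N (fun i t => g i t.+1) be N (leqnn N); rewrite subnn expr0 mul1r; exact.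
have WA0 : \det (Win N g rA 0) = al * Dw 0 (fun i t => g i t - al * g i t.+1).
  have := @winG R N g al N.+1 (leqnSn N); rewrite subSnn expr1; exact.
have WB0 : \det (Win N g rB 0) = be * Dw 0 (fun i t => g i t - be * g i t.+1).
  have := @winG R N g be N.+1 (leqnSn N); rewrite subSnn expr1; exact.
move: J; rewrite hM hB WA1 WB1 WA0 WB0 => J.
transitivity (- (Dw 1 g * ((al - be) * Dw 0 (fun i t => g i t - (al + be) * g i t.+1 + al * be * g i t.+2)))).
  by rewrite J; ring.
ring.
Qed.

End CasMaster.

Section PowLemmas.
Variable R : fieldType.
Lemma powS (x : R) (z : int) : x != 0 -> x ^ (z + 1) = x ^ z * x.
Proof. by move=> nz; rewrite expfzDr // expr1z. Qed.
Lemma powP (x : R) (z : int) : x != 0 -> x ^ (z - 1) = x ^ z / x.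
Proof. by move=> nz; rewrite expfzDr // -invr_expz expr1z. Qed.
Lemma powNS (x : R) (z : int) : x != 0 -> x ^ (- (z + 1)) = x ^ (- z) / x.
Proof. by move=> nz; rewrite opprD powP. Qed.
Lemma powNP (x : R) (z : int) : x != 0 -> x ^ (- (z - 1)) = x ^ (- z) * x.
Proof. by move=> nz; rewrite opprB addrC powS. Qed.
End PowLemmas.

Section GramFinal.
Variable R : fieldType.
Variables (a b c : R) (N : nat).
Hypotheses (a0 : a != 0) (b0 : b != 0) (c0 : c != 0).
Variables (p q : 'I_N -> R) (C : 'I_N -> 'I_N -> R).
Hypotheses (hp : forall i, p i != 0) (hq : forall j, q j != 0)
  (hpq : forall i j, p i + q j != 0)
  (hap : forall i, 1 - a * p i != 0) (haq : forall j, 1 + a * q j != 0)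
  (hbp : forall i, 1 - b / p i != 0) (hbq : forall j, 1 + b / q j != 0)
  (hcp : forall i, 1 - c * p i != 0) (hcq : forall j, 1 + c * q j != 0).

Lemma hbp' i : 1 - b^-1 * p i != 0.
Proof.
have -> : 1 - b^-1 * p i = - (b^-1 * p i) * (1 - b / p i) by field; rewrite hp.
by rewrite mulf_neq0 ?oppr_eq0 ?mulf_neq0 ?invr_eq0 ?hp ?hbp.
Qed.

Lemma hb3 i : p i - b != 0.
Proof.
have -> : p i - b = p i * (1 - b / p i) by field; rewrite hp.
by rewrite mulf_neq0 ?hp ?hbp.
Qed.
Lemma hb1 i : b - p i != 0.
Proof. by rewrite -opprB oppr_eq0 hb3. Qed.
Lemma hb2 j : q j + b != 0.
Proof.
have -> : q j + b = q j * (1 + b / q j) by field; rewrite hq.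
by rewrite mulf_neq0 ?hq ?hbq.
Qed.

Ltac nzg := rewrite /=; repeat (match goal with
   | |- is_true (_ && _) => apply/andP; split
   | |- is_true (_ * _ != 0) => apply: mulf_neq0
   | |- is_true (- _ != 0) => rewrite oppr_eq0
   | |- is_true (_^-1 != 0) => rewrite invr_eq0
   end); try done;
   try solve [exact: hp | exact: hq | exact: hpq | exact: hap | exact: haq | exact: hbp
             | exact: hbq | exact: hcp | exact: hcq | exact: hbp' | exact: hb1 | exact: hb2 | exact: hb3 | exact: a0 | exact: b0 | exact: c0
             | exact: oner_neq0].

Lemma alg1 (A B C' D E F : R) :
  A * B - b^-1 / c * C' * D = (1 - b^-1 / c) * E * F ->
  C' * D - b * c * A * B = (1 - b * c) * E * F.
Proof.
move=> H; have -> : C' * D - b * c * A * B = - (b * c) * (A * B - b^-1 / c * C' * D).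
  by field; nzg.
by rewrite H; field; nzg.
Qed.

Lemma gram_part : satisfies_bilinear a b c (tau_gram a b c p q C).
Proof.
move=> n k l m.
pose ph := fun i => (- p i) ^ n * (1 - a * p i) ^ (- k) * (1 - b / p i) ^ (- l) * (1 - c * p i) ^ m.
pose ps := fun j => (q j)^-1 ^ n * (1 + a * q j)^-1 ^ (- k) * (1 + b / q j)^-1 ^ (- l) * (1 + c * q j)^-1 ^ m.
have sep : forall i j, ph i * ps j = (- (p i / q j)) ^ n * ((1 - a * p i) / (1 + a * q j)) ^ (- k)
    * ((1 - b / p i) / (1 + b / q j)) ^ (- l) * ((1 - c * p i) / (1 + c * q j)) ^ m.
  by move=> i j; rewrite /ph /ps -[- (p i / q j)]mulNr !expfzMl; ring.
have key : forall (n' k' l' m' : int) (f : R -> R -> R),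
   (forall i j, (- (p i / q j)) ^ n' * ((1 - a * p i) / (1 + a * q j)) ^ (- k')
    * ((1 - b / p i) / (1 + b / q j)) ^ (- l') * ((1 - c * p i) / (1 + c * q j)) ^ m'
    = ph i * ps j * f (p i) (q j)) ->
   tau_gram a b c p q C n' k' l' m' = \det (GM p q ph ps C f).
  move=> n' k' l' m' f H; rewrite /tau_gram; congr (\det _); apply/matrixP => i j.
  by rewrite !mxE -H; ring.
have nr : forall i j, - (p i / q j) != 0 by move=> i j; nzg.
have ns : forall i j, (1 - a * p i) / (1 + a * q j) != 0 by move=> i j; nzg.
have nt : forall i j, (1 - b / p i) / (1 + b / q j) != 0 by move=> i j; nzg.
have nu : forall i j, (1 - c * p i) / (1 + c * q j) != 0 by move=> i j; nzg.
have T0 : tau_gram a b c p q C n k l m = \det (GM p q ph ps C (fun _ _ => 1)).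
  by apply: key => i j; rewrite sep mulr1.
have E101 : tau_gram a b c p q C (n + 1) k l (m - 1) =
    \det (GM p q ph ps C (fun P Q => - (P / Q) * ((1 + c * Q) / (1 - c * P)))).
  apply: key => i j; rewrite powS ?nr // powP ?nu // sep; field; nzg.
have E010 : tau_gram a b c p q C n (k + 1) l m =
    \det (GM p q ph ps C (fun P Q => (1 + a * Q) / (1 - a * P))).
  apply: key => i j; rewrite powNS ?ns // sep; field; nzg.
have E110 : tau_gram a b c p q C (n + 1) (k + 1) l m =
    \det (GM p q ph ps C (fun P Q => - (P / Q) * ((1 + a * Q) / (1 - a * P)))).
  apply: key => i j; rewrite powS ?nr // powNS ?ns // sep; field; nzg.
have E001 : tau_gram a b c p q C n k l (m - 1) =
    \det (GM p q ph ps C (fun P Q => (1 + c * Q) / (1 - c * P))).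
  apply: key => i j; rewrite powP ?nu // sep; field; nzg.
have E111 : tau_gram a b c p q C (n + 1) (k + 1) l (m - 1) =
    \det (GM p q ph ps C (fun P Q => - (P / Q) * ((1 + a * Q) / (1 - a * P)) * ((1 + c * Q) / (1 - c * P)))).
  apply: key => i j; rewrite powS ?nr // powNS ?ns // powP ?nu // sep; field; nzg.
have L110 : tau_gram a b c p q C n k (l + 1) m =
    \det (GM p q ph ps C (fun P Q => - (P / Q) * ((1 + b^-1 * Q) / (1 - b^-1 * P)))).
  apply: key => i j; rewrite powNS ?nt // sep; field; nzg.
have L010 : tau_gram a b c p q C (n - 1) k (l + 1) m =
    \det (GM p q ph ps C (fun P Q => (1 + b^-1 * Q) / (1 - b^-1 * P))).
  apply: key => i j; rewrite powP ?nr // powNS ?nt // sep; field; nzg.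
have L111 : tau_gram a b c p q C n k (l + 1) (m - 1) =
    \det (GM p q ph ps C (fun P Q => - (P / Q) * ((1 + b^-1 * Q) / (1 - b^-1 * P)) * ((1 + c * Q) / (1 - c * P)))).
  apply: key => i j; rewrite powNS ?nt // powP ?nu // sep; field; nzg.
split.
  rewrite L110 E001 E101 L010 T0 L111; apply: alg1.
  exact: (gram_master ph ps C (invr_neq0 b0) c0 hpq hq hbp' hcp).
rewrite E101 E010 E110 E001 T0 E111.
exact: (gram_master ph ps C a0 c0 hpq hq hap hcp).
Qed.
End GramFinal.

Section CasFinal.
Variable R : fieldType.
Variables (a b c : R) (N : nat).
Hypotheses (a0 : a != 0) (b0 : b != 0) (c0 : c != 0) (HN : (0 < N)%N).
Variables (p q cc dd : 'I_N -> R).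
Hypotheses (hp : forall i, p i != 0) (hq : forall i, q i != 0)
  (hap : forall i, 1 - a * p i != 0) (haq : forall i, 1 - a * q i != 0)
  (hbp : forall i, 1 - b / p i != 0) (hbq : forall i, 1 - b / q i != 0)
  (hcp : forall i, 1 - c * p i != 0) (hcq : forall i, 1 - c * q i != 0).

Local Notation phi := (phi_cas a b c p q cc dd).

Lemma RK i t k l m : phi i t k l m = phi i t (k + 1) l m - a * phi i (t + 1) (k + 1) l m.
Proof.
rewrite /phi_cas !(powNS _ (hap i)) !(powNS _ (haq i)) !(powS _ (hp i)) !(powS _ (hq i)).
by field; rewrite hap haq.
Qed.

Lemma RM i t k l m : phi i t k l m = phi i t k l (m - 1) - c * phi i (t + 1) k l (m - 1).
Proof.
rewrite /phi_cas !(powP _ (hcp i)) !(powP _ (hcq i)) !(powS _ (hp i)) !(powS _ (hq i)).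
by field; rewrite hcp hcq.
Qed.

Lemma hpb i : p i - b != 0.
Proof.
have -> : p i - b = p i * (1 - b / p i) by field; rewrite hp.
by rewrite mulf_neq0 ?hp ?hbp.
Qed.
Lemma hqb i : q i - b != 0.
Proof.
have -> : q i - b = q i * (1 - b / q i) by field; rewrite hq.
by rewrite mulf_neq0 ?hq ?hbq.
Qed.

Lemma RL i t k l m : phi i t k l m = phi i t k (l + 1) m - b * phi i (t - 1) k (l + 1) m.
Proof.
rewrite /phi_cas !(powNS _ (hbp i)) !(powNS _ (hbq i)) !(powP _ (hp i)) !(powP _ (hq i)).
by field; rewrite hpb hqb hp hq.
Qed.

End CasFinal.

Lemma mk_scale (R : comNzRingType) m n (x : R) (h : nat -> nat -> R) :
  mk m n (fun i j => x * h i j) = x *: mk m n h.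
Proof. by apply/matrixP => i j; rewrite !mxE. Qed.

Section CasFinal2.
Variable R : fieldType.
Variables (a b c : R) (N : nat).
Hypotheses (a0 : a != 0) (b0 : b != 0) (c0 : c != 0) (HN : (0 < N)%N).
Variables (p q cc dd : 'I_N -> R).
Hypotheses (hp : forall i, p i != 0) (hq : forall i, q i != 0)
  (hap : forall i, 1 - a * p i != 0) (haq : forall i, 1 - a * q i != 0)
  (hbp : forall i, 1 - b / p i != 0) (hbq : forall i, 1 - b / q i != 0)
  (hcp : forall i, 1 - c * p i != 0) (hcq : forall i, 1 - c * q i != 0).

Local Notation phi := (phi_cas a b c p q cc dd).

Lemma cas_part : satisfies_bilinear a b c (tau_cas a b c p q cc dd).
Proof.
have RK := RK b c cc dd hp hq hap haq.
have RM := RM a b cc dd hp hq hcp hcq.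
have RL := RL a c cc dd hp hq hbp hbq.
move=> n k l m.
pose i0 := Ordinal HN.
have tauC : forall n' k' l' m' (F : nat -> nat -> R),
    (forall i j : 'I_N, F i j = phi i (n' + (j : nat)%:Z) k' l' m') ->
    tau_cas a b c p q cc dd n' k' l' m' = \det (mk N N F).
  move=> n' k' l' m' F H; rewrite /tau_cas; congr (\det _); apply/matrixP => i j.
  by rewrite !mxE H.
split.
  pose g := fun (i t : nat) => phi (insubd i0 i) (n - 1 + t%:Z) k (l + 1) (m - 1).
  have M := cas_master N g b^-1 c.
  have T1 : tau_cas a b c p q cc dd n k (l + 1) m = Dw N 1 (fun i t => g i t - c * g i t.+1).
    apply: tauC => i j; rewrite /g /= valKd [RHS]RM.
    have -> : n - 1 + (1 + j)%N%:Z = n + j%:Z by lia.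
    by have -> : n - 1 + (1 + j)%N.+1%:Z = n + j%:Z + 1 by lia.
  have T2 : tau_cas a b c p q cc dd n k l (m - 1) = (- b) ^+ N * Dw N 0 (fun i t => g i t - b^-1 * g i t.+1).
    rewrite /Dw -detZ -mk_scale; apply: tauC => i j; rewrite /g /= valKd [RHS]RL.
    have -> : n - 1 + (0 + j)%N%:Z = n + j%:Z - 1 by lia.
    have -> : n - 1 + (0 + j)%N.+1%:Z = n + j%:Z by lia.
    by field.
  have T3 : tau_cas a b c p q cc dd (n + 1) k l (m - 1) = (- b) ^+ N * Dw N 1 (fun i t => g i t - b^-1 * g i t.+1).
    rewrite /Dw -detZ -mk_scale; apply: tauC => i j; rewrite /g /= valKd [RHS]RL.
    have -> : n - 1 + (1 + j)%N%:Z = n + 1 + j%:Z - 1 by lia.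
    have -> : n - 1 + (1 + j)%N.+1%:Z = n + 1 + j%:Z by lia.
    by field.
  have T4 : tau_cas a b c p q cc dd (n - 1) k (l + 1) m = Dw N 0 (fun i t => g i t - c * g i t.+1).
    apply: tauC => i j; rewrite /g /= valKd [RHS]RM.
    have -> : n - 1 + (0 + j)%N%:Z = n - 1 + j%:Z by lia.
    by have -> : n - 1 + (0 + j)%N.+1%:Z = n - 1 + j%:Z + 1 by lia.
  have T5 : tau_cas a b c p q cc dd n k l m =
      (- b) ^+ N * Dw N 0 (fun i t => g i t - (b^-1 + c) * g i t.+1 + b^-1 * c * g i t.+2).
    rewrite /Dw -detZ -mk_scale; apply: tauC => i j; rewrite /g /= valKd [RHS]RL.
    rewrite (RM _ (n + j%:Z)) (RM _ (n + j%:Z - 1)).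
    have -> : n - 1 + (0 + j)%N%:Z = n + j%:Z - 1 by lia.
    have -> : n - 1 + (0 + j)%N.+1%:Z = n + j%:Z by lia.
    have -> : n - 1 + (0 + j)%N.+2%:Z = n + j%:Z + 1 by lia.
    have -> : n + j%:Z - 1 + 1 = n + j%:Z by lia.
    by field.
  have T6 : tau_cas a b c p q cc dd n k (l + 1) (m - 1) = Dw N 1 g.
    apply: tauC => i j; rewrite /g /= valKd.
    by have -> : n - 1 + (1 + j)%N%:Z = n + j%:Z by lia.
  rewrite T1 T2 T3 T4 T5 T6.
  move: M; set X1 := Dw N 1 _; set X2 := Dw N 0 _; set X3 := Dw N 1 _; set X4 := Dw N 0 _.
  set X5 := Dw N 0 _; set X6 := Dw N 1 g => M.
  have -> : X3 * ((- b) ^+ N * X4) - b * c * ((- b) ^+ N * X1) * X2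
      = (- b) ^+ N * (- b) * (c * X1 * X2 - b^-1 * X3 * X4) by field.
  by rewrite M; field.
pose g := fun (i t : nat) => phi (insubd i0 i) (n + t%:Z) (k + 1) l (m - 1).
have M := cas_master N g a c.
have A1 : tau_cas a b c p q cc dd (n + 1) k l (m - 1) = Dw N 1 (fun i t => g i t - a * g i t.+1).
  apply: tauC => i j; rewrite /g /= valKd [RHS]RK.
  have -> : n + (1 + j)%N%:Z = n + 1 + j%:Z by lia.
  by have -> : n + (1 + j)%N.+1%:Z = n + 1 + j%:Z + 1 by lia.
have B0 : tau_cas a b c p q cc dd n (k + 1) l m = Dw N 0 (fun i t => g i t - c * g i t.+1).
  apply: tauC => i j; rewrite /g /= valKd [RHS]RM.
  have -> : n + (0 + j)%N%:Z = n + j%:Z by lia.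
  by have -> : n + (0 + j)%N.+1%:Z = n + j%:Z + 1 by lia.
have B1 : tau_cas a b c p q cc dd (n + 1) (k + 1) l m = Dw N 1 (fun i t => g i t - c * g i t.+1).
  apply: tauC => i j; rewrite /g /= valKd [RHS]RM.
  have -> : n + (1 + j)%N%:Z = n + 1 + j%:Z by lia.
  by have -> : n + (1 + j)%N.+1%:Z = n + 1 + j%:Z + 1 by lia.
have A0 : tau_cas a b c p q cc dd n k l (m - 1) = Dw N 0 (fun i t => g i t - a * g i t.+1).
  apply: tauC => i j; rewrite /g /= valKd [RHS]RK.
  have -> : n + (0 + j)%N%:Z = n + j%:Z by lia.
  by have -> : n + (0 + j)%N.+1%:Z = n + j%:Z + 1 by lia.
have AB0 : tau_cas a b c p q cc dd n k l m =
    Dw N 0 (fun i t => g i t - (a + c) * g i t.+1 + a * c * g i t.+2).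
  apply: tauC => i j; rewrite /g /= valKd [RHS]RK.
  rewrite (RM _ (n + j%:Z) (k + 1) l m) (RM _ (n + j%:Z + 1) (k + 1) l m).
  have -> : n + (0 + j)%N%:Z = n + j%:Z by lia.
  have -> : n + (0 + j)%N.+1%:Z = n + j%:Z + 1 by lia.
  have -> : n + (0 + j)%N.+2%:Z = n + j%:Z + 1 + 1 by lia.
  by ring.
have G1 : tau_cas a b c p q cc dd (n + 1) (k + 1) l (m - 1) = Dw N 1 g.
  apply: tauC => i j; rewrite /g /= valKd.
  by have -> : n + (1 + j)%N%:Z = n + 1 + j%:Z by lia.
rewrite A1 B0 B1 A0 AB0 G1.
move: M; set X1 := Dw N 1 _; set X2 := Dw N 0 _; set X3 := Dw N 1 _; set X4 := Dw N 0 _.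
set X5 := Dw N 0 _; set X6 := Dw N 1 g => M.
have -> : X1 * X2 - a / c * X3 * X4 = c^-1 * (c * X1 * X2 - a * X3 * X4) by field.
by rewrite M; field.
Qed.
End CasFinal2.


Unset Implicit Arguments.

Theorem proposition1 (R : fieldType) (a b c : R) (N : nat) :
  a != 0 -> b != 0 -> c != 0 -> (0 < N)%N ->
  (forall (p q : 'I_N -> R) (C : 'I_N -> 'I_N -> R),
     (forall i, p i != 0) -> (forall j, q j != 0) ->
     (forall i j, p i + q j != 0) ->
     (forall i, 1 - a * p i != 0) -> (forall j, 1 + a * q j != 0) ->
     (forall i, 1 - b / p i != 0) -> (forall j, 1 + b / q j != 0) ->
     (forall i, 1 - c * p i != 0) -> (forall j, 1 + c * q j != 0) ->
     satisfies_bilinear a b c (tau_gram a b c p q C))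
  /\
  (forall (p q cc dd : 'I_N -> R),
     (forall i, p i != 0) -> (forall i, q i != 0) ->
     (forall i, 1 - a * p i != 0) -> (forall i, 1 - a * q i != 0) ->
     (forall i, 1 - b / p i != 0) -> (forall i, 1 - b / q i != 0) ->
     (forall i, 1 - c * p i != 0) -> (forall i, 1 - c * q i != 0) ->
     satisfies_bilinear a b c (tau_cas a b c p q cc dd)).
Proof.
move=> a0 b0 c0 HN; split.
  by move=> p q C hp hq hpq hap haq hbp hbq hcp hcq; apply: gram_part.
by move=> p q cc dd hp hq hap haq hbp hbq hcp hcq; apply: cas_part.
Qed.
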